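(* Let $K\ge2$ and $T\ge1$. Suppose arms $A_1,A_2,\dots\in[K]$ are chosen by any (possibly randomized, history-dependent) rule, and in each round $t$, given the past and $A_t$, $B_t$ is drawn uniformly from $[K]\setminus\{A_t\}$. Let $Z_t^a=\sum_{s=1}^t\mathbb 1(B_s=a)$. Then \[ \mathbb E\Big[\max_{a\in[K]}Z_{T-1}^a\Big]\le\frac{T-1}{K-1}+\sqrt{\frac T2\ln\!\big(\sqrt T(K-1)\big)}+2\sqrt T . \]
   Context: $[K]=\{1,\dots,K\}$. *)

(* Defs.v *)
From Stdlib Require Import Reals List Arith.
Import ListNotations.
Open Scope R_scope.

Definition arms (K : nat) : list nat := List.seq 1 K.

Definition lsum {A : Type} (l : list A) (f : A -> R) : R :=
  fold_right Rplus 0 (map f l).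

(* A history is the chronological list of pairs (A_s, B_s). *)
Definition history := list (nat * nat).

(* A randomized, history-dependent arm-selection rule:
   pi h a = probability of choosing arm a in the next round given history h. *)
Definition policy := history -> nat -> R.

Definition is_policy (K : nat) (pi : policy) : Prop :=
  (forall h a, 0 <= pi h a) /\ (forall h, lsum (arms K) (pi h) = 1).

(* Expectation of f(history after n more rounds), starting from history h:
   A_t ~ pi h, then B_t uniform on [K] \ {A_t}. *)
Fixpoint expval (K : nat) (pi : policy) (n : nat) (h : history)
    (f : history -> R) : R :=
  match n with
  | O => f h
  | S n' =>
      lsum (arms K) (fun a =>
        pi h a *
        lsum (filter (fun b => negb (Nat.eqb b a)) (arms K)) (fun b =>
          / INR (K - 1) * expval K pi n' (h ++ [(a, b)]) f))
  end.

Definition Zcount (h : history) (a : nat) : nat :=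
  length (filter (fun p => Nat.eqb (snd p) a) h).

Definition maxZ (K : nat) (h : history) : nat :=
  fold_right Nat.max 0%nat (map (Zcount h) (arms K)).

(* Main.v *)
Require Import Defs.
From Stdlib Require Import Reals List Arith Lra Lia.
Import ListNotations.
Open Scope R_scope.

Lemma lsum_nil {A} (f : A -> R) : lsum [] f = 0. Proof. reflexivity. Qed.
Lemma lsum_cons {A} (x : A) l f : lsum (x :: l) f = f x + lsum l f. Proof. reflexivity. Qed.

Lemma lsum_ext_in {A} (l : list A) f g : (forall x, In x l -> f x = g x) -> lsum l f = lsum l g.
Proof. induction l as [|y l IH]; intros H; rewrite ?lsum_nil, ?lsum_cons; auto.
  rewrite H by (left; auto). rewrite IH; auto. intros; apply H; right; auto. Qed.

Lemma lsum_add {A} (l : list A) f g : lsum l (fun x => f x + g x) = lsum l f + lsum l g.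
Proof. induction l; rewrite ?lsum_nil, ?lsum_cons; [lra|rewrite IHl; ring]. Qed.

Lemma lsum_scal {A} (l : list A) c f : lsum l (fun x => c * f x) = c * lsum l f.
Proof. induction l; rewrite ?lsum_nil, ?lsum_cons; [ring|rewrite IHl; ring]. Qed.

Lemma lsum_const {A} (l : list A) c : lsum l (fun _ => c) = INR (length l) * c.
Proof. induction l; rewrite ?lsum_nil, ?lsum_cons; simpl length; [simpl; ring|rewrite IHl, S_INR; ring]. Qed.

Lemma lsum_le_in {A} (l : list A) f g : (forall x, In x l -> f x <= g x) -> lsum l f <= lsum l g.
Proof. induction l as [|y l IH]; intros H; rewrite ?lsum_nil, ?lsum_cons; [lra|].
  apply Rplus_le_compat; [apply H; left; auto | apply IH; intros; apply H; right; auto]. Qed.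

Lemma lsum_swap {A B} (l1 : list A) (l2 : list B) f :
  lsum l1 (fun x => lsum l2 (fun y => f x y)) = lsum l2 (fun y => lsum l1 (fun x => f x y)).
Proof. induction l1; rewrite ?lsum_nil, ?lsum_cons.
  - symmetry. rewrite (lsum_ext_in _ _ (fun _ => 0)) by (intros; reflexivity).
    rewrite lsum_const; ring.
  - rewrite IHl1. rewrite <- lsum_add. apply lsum_ext_in; intros; rewrite lsum_cons; ring. Qed.

Lemma lsum_filter {A} (p : A -> bool) l f :
  lsum (filter p l) f = lsum l (fun x => if p x then f x else 0).
Proof. induction l; simpl filter; rewrite ?lsum_nil, ?lsum_cons; auto.
  destruct (p a); rewrite ?lsum_cons, IHl; ring. Qed.

Lemma lsum_zero (l : list nat) a f : ~ In a l -> lsum l (fun x => if Nat.eqb x a then f x else 0) = 0.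
Proof. induction l as [|y l IH]; intros H; rewrite ?lsum_nil, ?lsum_cons; auto.
  destruct (Nat.eqb_spec y a). subst; exfalso; apply H; left; auto.
  rewrite IH. ring. intro; apply H; right; auto. Qed.

Lemma lsum_pick (l : list nat) a f : NoDup l -> In a l ->
  lsum l (fun x => if Nat.eqb x a then f x else 0) = f a.
Proof. induction l as [|y l IH]; intros Hn Hi; [destruct Hi|]. rewrite lsum_cons.
  apply NoDup_cons_iff in Hn as [Hy Hn].
  destruct (Nat.eqb_spec y a).
  - subst. rewrite lsum_zero by auto. ring.
  - destruct Hi as [Hi|Hi]; [congruence|]. rewrite IH; auto; ring. Qed.

Lemma lsum_nonneg_le {A} (l : list A) f a : (forall x, 0 <= f x) -> In a l -> f a <= lsum l f.
Proof. induction l as [|y l IH]; intros H Hi; [destruct Hi|]. rewrite lsum_cons.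
  assert (0 <= lsum l f). { rewrite <- (Rmult_0_r (INR (length l))), <- lsum_const.
    apply lsum_le_in; auto. }
  destruct Hi as [<-|Hi]. lra. specialize (IH H Hi). specialize (H y). lra. Qed.

Definition filt K x := filter (fun b => negb (Nat.eqb b x)) (arms K).
Definition step2 K (pi : policy) h (G : nat -> nat -> R) :=
  lsum (arms K) (fun x => pi h x * lsum (filt K x) (fun b => / INR (K - 1) * G x b)).

Lemma expval_S K pi n h f : expval K pi (S n) h f = step2 K pi h (fun x b => expval K pi n (h ++ [(x,b)]) f).
Proof. reflexivity. Qed.

Lemma in_filt K x b : In b (filt K x) -> In b (arms K).
Proof. unfold filt; rewrite filter_In; tauto. Qed.

Lemma w_pos K : (2 <= K)%nat -> 0 < / INR (K - 1).
Proof. intros; apply Rinv_0_lt_compat, lt_0_INR; lia. Qed.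

Lemma step2_mono_in K pi h G G' : (2 <= K)%nat -> is_policy K pi ->
  (forall x b, In x (arms K) -> In b (arms K) -> G x b <= G' x b) -> step2 K pi h G <= step2 K pi h G'.
Proof. intros HK [Hp _] H. unfold step2. apply lsum_le_in; intros x Hx.
  apply Rmult_le_compat_l; auto. apply lsum_le_in; intros b Hb.
  apply Rmult_le_compat_l. left; apply w_pos; auto. apply H; auto. eapply in_filt; eauto. Qed.

Lemma step2_ext_in K pi h G G' :
  (forall x b, In x (arms K) -> In b (arms K) -> G x b = G' x b) -> step2 K pi h G = step2 K pi h G'.
Proof. intros H. unfold step2. apply lsum_ext_in; intros x Hx. f_equal.
  apply lsum_ext_in; intros b Hb. rewrite H; auto. eapply in_filt; eauto. Qed.

Lemma step2_add K pi h G G' : step2 K pi h (fun x b => G x b + G' x b) = step2 K pi h G + step2 K pi h G'.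
Proof. unfold step2. rewrite <- lsum_add. apply lsum_ext_in; intros.
  rewrite <- Rmult_plus_distr_l, <- lsum_add. f_equal. apply lsum_ext_in; intros; ring. Qed.

Lemma step2_scal K pi h c G : step2 K pi h (fun x b => c * G x b) = c * step2 K pi h G.
Proof. unfold step2. rewrite <- lsum_scal. apply lsum_ext_in; intros.
  rewrite (lsum_ext_in _ _ (fun b => c * (/ INR (K - 1) * G x b))) by (intros; ring).
  rewrite lsum_scal; ring. Qed.

Lemma step2_sum {A} K pi h (l : list A) F :
  step2 K pi h (fun x b => lsum l (fun a => F a x b)) = lsum l (fun a => step2 K pi h (F a)).
Proof. unfold step2.
  rewrite (lsum_swap l (arms K) (fun a x => pi h x * lsum (filt K x) (fun b => / INR (K - 1) * F a x b))).
  apply lsum_ext_in; intros x _.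
  rewrite (lsum_scal l (pi h x)). f_equal.
  rewrite (lsum_swap l (filt K x) (fun a b => / INR (K - 1) * F a x b)).
  apply lsum_ext_in; intros b _.
  rewrite lsum_scal. reflexivity. Qed.

Lemma arms_nodup K : NoDup (arms K). Proof. apply seq_NoDup. Qed.
Lemma arms_len K : length (arms K) = K. Proof. apply length_seq. Qed.

Lemma filt_sum K x g : In x (arms K) ->
  lsum (filt K x) g = lsum (arms K) g - g x.
Proof. intros Hx. unfold filt. rewrite lsum_filter.
  rewrite <- (lsum_pick (arms K) x g) by (auto using arms_nodup).
  assert (E: lsum (arms K) g = lsum (arms K) (fun y => (if negb (Nat.eqb y x) then g y else 0) + (if Nat.eqb y x then g y else 0))).
  { apply lsum_ext_in; intros y _. destruct (Nat.eqb y x); simpl; ring. }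
  rewrite E, lsum_add. ring. Qed.

Lemma Km1 K : (2 <= K)%nat -> INR (K - 1) = INR K - 1.
Proof. intros; rewrite minus_INR by lia; simpl; ring. Qed.

Lemma step2_const K pi h c : (2 <= K)%nat -> is_policy K pi -> step2 K pi h (fun _ _ => c) = c.
Proof. intros HK [_ Hs]. unfold step2.
  rewrite (lsum_ext_in _ _ (fun x => c * pi h x)).
  - rewrite lsum_scal, Hs; ring.
  - intros x Hx. rewrite filt_sum by auto. rewrite lsum_const, arms_len.
    rewrite Km1 by auto. assert (INR K - 1 <> 0) by (rewrite <- Km1 by auto; apply not_0_INR; lia).
    field; auto. Qed.

Lemma sum_pi_le K pi h a : is_policy K pi -> In a (arms K) -> pi h a <= 1.
Proof. intros [Hp Hs] Ha. rewrite <- (Hs h). apply lsum_nonneg_le; auto. Qed.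

Definition indic (b a : nat) : R := if Nat.eqb b a then 1 else 0.
Definition q K (pi : policy) h a := (1 - pi h a) * / INR (K - 1).

Fixpoint Mf K pi a (pre rest : history) : R :=
  match rest with
  | [] => 0
  | (x, b) :: r => indic b a - q K pi pre a + Mf K pi a (pre ++ [(x, b)]) r
  end.

Lemma Mf_app K pi a r : forall pre x b,
  Mf K pi a pre (r ++ [(x, b)]) = Mf K pi a pre r + (indic b a - q K pi (pre ++ r) a).
Proof. induction r as [|[y c] r IH]; intros pre x b; simpl.
  - rewrite app_nil_r; ring.
  - rewrite IH, <- app_assoc. simpl. ring. Qed.

Definition M K pi a h := Mf K pi a [] h.

Lemma M_app K pi a h x b : M K pi a (h ++ [(x, b)]) = M K pi a h + (indic b a - q K pi h a).
Proof. unfold M; rewrite Mf_app; reflexivity. Qed.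

Lemma Mf_lower K pi a r : (2 <= K)%nat -> is_policy K pi -> forall pre,
  INR (Zcount r a) - INR (length r) * / INR (K - 1) <= Mf K pi a pre r.
Proof. intros HK [Hp _]. induction r as [|[x b] r IH]; intros pre.
  - simpl. lra.
  - simpl Mf. specialize (IH (pre ++ [(x,b)])).
    assert (Hq: q K pi pre a <= / INR (K - 1)).
    { unfold q. rewrite <- (Rmult_1_l (/ INR (K-1))) at 2. apply Rmult_le_compat_r.
      left; apply w_pos; auto. specialize (Hp pre a); lra. }
    unfold Zcount in *. simpl filter. simpl length. unfold indic.
    destruct (Nat.eqb b a); simpl length; rewrite ?S_INR; lra. Qed.

Lemma M_lower K pi a h : (2 <= K)%nat -> is_policy K pi ->
  INR (Zcount h a) <= INR (length h) * / INR (K - 1) + Rabs (M K pi a h).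
Proof. intros. pose proof (Mf_lower K pi a h H H0 []). unfold M.
  pose proof (Rle_abs (Mf K pi a [] h)). lra. Qed.

Definition V K pi h := lsum (arms K) (fun a => Rsqr (M K pi a h)).

Lemma max_bound (l : list nat) (f : nat -> nat) (m : nat -> R) c : 0 <= c ->
  (forall a, In a l -> INR (f a) <= c + Rabs (m a)) ->
  INR (fold_right Nat.max 0%nat (map f l)) <= c + sqrt (lsum l (fun a => Rsqr (m a))).
Proof. intros Hc. induction l as [|y l IH]; intros H.
  - simpl. rewrite lsum_nil, sqrt_0. lra.
  - simpl fold_right. rewrite lsum_cons.
    assert (H0 : 0 <= lsum l (fun a => Rsqr (m a))).
    { rewrite <- (Rmult_0_r (INR (length l))), <- lsum_const. apply lsum_le_in; intros; apply Rle_0_sqr. }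
    assert (H1 : sqrt (lsum l (fun a => Rsqr (m a))) <= sqrt (Rsqr (m y) + lsum l (fun a => Rsqr (m a)))).
    { apply sqrt_le_1_alt. pose proof (Rle_0_sqr (m y)). lra. }
    assert (H2 : Rabs (m y) <= sqrt (Rsqr (m y) + lsum l (fun a => Rsqr (m a)))).
    { rewrite <- sqrt_Rsqr_abs. apply sqrt_le_1_alt. lra. }
    destruct (Nat.le_ge_cases (f y) (fold_right Nat.max 0%nat (map f l))).
    + rewrite Nat.max_r by auto. specialize (IH (fun a Ha => H a (or_intror Ha))). lra.
    + rewrite Nat.max_l by auto. specialize (H y (or_introl eq_refl)). lra. Qed.

Lemma maxZ_bound K pi h : (2 <= K)%nat -> is_policy K pi ->
  INR (maxZ K h) <= INR (length h) * / INR (K - 1) + sqrt (V K pi h).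
Proof. intros. unfold maxZ, V. apply max_bound.
  apply Rmult_le_pos. apply pos_INR. left; apply w_pos; auto.
  intros; apply M_lower; auto. Qed.

Lemma step2_ind K pi h a : (2 <= K)%nat -> is_policy K pi -> In a (arms K) ->
  step2 K pi h (fun x b => indic b a) = q K pi h a.
Proof. intros HK Hpi Ha. pose proof Hpi as [Hp Hs]. unfold step2.
  rewrite (lsum_ext_in _ _ (fun x => / INR (K - 1) * pi h x - (if Nat.eqb x a then / INR (K - 1) * pi h x else 0))).
  - unfold Rminus. 
    assert (E: forall F G : nat -> R, lsum (arms K) (fun x => F x + - G x) = lsum (arms K) F + (-1) * lsum (arms K) G).
    { intros. rewrite <- lsum_scal, <- lsum_add. apply lsum_ext_in; intros; ring. }
    rewrite E, lsum_scal, Hs, lsum_pick by (auto using arms_nodup). unfold q. ring.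
  - intros x Hx. rewrite filt_sum by auto.
    rewrite (lsum_ext_in _ _ (fun b => if Nat.eqb b a then / INR (K - 1) else 0)).
    2:{ intros; unfold indic; destruct (Nat.eqb x0 a); ring. }
    rewrite (lsum_pick _ _ (fun _ => / INR (K-1))) by (auto using arms_nodup).
    unfold indic. destruct (Nat.eqb_spec x a); subst; rewrite ?Nat.eqb_refl; simpl.
    ring. ring. Qed.

Lemma q_bounds K pi h a : (2 <= K)%nat -> is_policy K pi -> In a (arms K) ->
  0 <= q K pi h a <= 1.
Proof. intros HK Hpi Ha. pose proof (sum_pi_le K pi h a Hpi Ha). destruct Hpi as [Hp _].
  specialize (Hp h a). pose proof (w_pos K HK).
  assert (1 <= INR (K - 1)) by (apply (le_INR 1); lia).
  assert (/ INR (K - 1) <= 1) by (rewrite <- Rinv_1; apply Rinv_le_contravar; lra).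
  unfold q; split. apply Rmult_le_pos; lra.
  apply Rle_trans with (1 * / INR (K - 1)); [apply Rmult_le_compat_r|]; lra. Qed.

Lemma sum_q K pi h : (2 <= K)%nat -> is_policy K pi -> lsum (arms K) (q K pi h) = 1.
Proof. intros HK [Hp Hs]. unfold q.
  rewrite (lsum_ext_in _ _ (fun a => / INR (K - 1) * 1 + (- / INR (K - 1)) * pi h a)) by (intros; ring).
  rewrite lsum_add, !lsum_scal, lsum_const, Hs, arms_len.
  assert (INR (K - 1) <> 0) by (apply not_0_INR; lia).
  rewrite Km1 in * by auto. field; auto. Qed.

Lemma sum_ind K b : In b (arms K) -> lsum (arms K) (fun a => indic b a) = 1.
Proof. intros Hb. rewrite (lsum_ext_in _ _ (fun a => if Nat.eqb a b then 1 else 0)).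
  apply (lsum_pick _ _ (fun _ => 1)); auto using arms_nodup.
  intros; unfold indic; rewrite Nat.eqb_sym; auto. Qed.

Lemma e2_bound K pi h b : (2 <= K)%nat -> is_policy K pi -> In b (arms K) ->
  lsum (arms K) (fun a => Rsqr (indic b a - q K pi h a)) <= 2.
Proof. intros HK Hpi Hb.
  apply Rle_trans with (lsum (arms K) (fun a => indic b a + q K pi h a)).
  - apply lsum_le_in; intros a Ha. pose proof (q_bounds K pi h a HK Hpi Ha).
    unfold indic, Rsqr. destruct (Nat.eqb b a); nra.
  - rewrite lsum_add, sum_ind, sum_q by auto. lra. Qed.

Lemma V_step K pi h : (2 <= K)%nat -> is_policy K pi ->
  step2 K pi h (fun x b => V K pi (h ++ [(x, b)])) <= V K pi h + 2.
Proof. intros HK Hpi.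
  rewrite (step2_ext_in _ _ _ _ (fun x b => lsum (arms K) (fun a =>
     Rsqr (M K pi a h) + (2 * M K pi a h) * (indic b a - q K pi h a) + Rsqr (indic b a - q K pi h a)))).
  2:{ intros x b _ _. unfold V. apply lsum_ext_in; intros a _. rewrite M_app. unfold Rsqr; ring. }
  rewrite (step2_sum K pi h (arms K) (fun a x b =>
     Rsqr (M K pi a h) + (2 * M K pi a h) * (indic b a - q K pi h a) + Rsqr (indic b a - q K pi h a))).
  rewrite (lsum_ext_in _ _ (fun a => Rsqr (M K pi a h) + step2 K pi h (fun x b => Rsqr (indic b a - q K pi h a)))).
  2:{ intros a Ha. rewrite !step2_add, step2_const, step2_scal by auto.
      rewrite (step2_ext_in _ _ _ _ (fun x b => indic b a + (-1) * q K pi h a)) by (intros; ring).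
      rewrite step2_add, step2_scal, step2_const, step2_ind by auto. ring. }
  rewrite lsum_add. fold (V K pi h).
  rewrite <- (step2_sum K pi h (arms K) (fun a x b => Rsqr (indic b a - q K pi h a))).
  apply Rplus_le_compat_l. rewrite <- (step2_const K pi h 2) by auto.
  apply step2_mono_in; auto. intros; apply e2_bound; auto. Qed.

Lemma expval_mono K pi n : (2 <= K)%nat -> is_policy K pi -> forall h f g,
  (forall h', f h' <= g h') -> expval K pi n h f <= expval K pi n h g.
Proof. intros HK Hpi. induction n; intros h f g H.
  - simpl; auto.
  - rewrite !expval_S. apply step2_mono_in; auto. Qed.

Lemma expval_super K pi n d g : (2 <= K)%nat -> is_policy K pi ->
  (forall h, step2 K pi h (fun x b => g (h ++ [(x, b)])) <= g h + d) ->
  forall h, expval K pi n h g <= g h + INR n * d.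
Proof. intros HK Hpi H. induction n; intros h.
  - simpl. lra.
  - rewrite expval_S.
    apply Rle_trans with (step2 K pi h (fun x b => g (h ++ [(x, b)]) + INR n * d)).
    + apply step2_mono_in; auto.
    + rewrite step2_add, step2_const by auto. specialize (H h). rewrite S_INR. lra. Qed.

Lemma sqrt_tangent x c : 0 <= x -> 0 < c -> sqrt x <= c / 2 + x / (2 * c).
Proof. intros Hx Hc. pose proof (sqrt_sqrt x Hx). pose proof (sqrt_pos x).
  apply Rmult_le_reg_l with (2 * c). lra.
  replace (2 * c * (c / 2 + x / (2 * c))) with (c * c + x) by (field; lra).
  pose proof (Rle_0_sqr (c - sqrt x)). unfold Rsqr in *. nra. Qed.

Theorem mainTheorem7 (K T : nat) (hK : (2 <= K)%nat) (hT : (1 <= T)%nat)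
  (pi : policy) (hpi : is_policy K pi) :
  expval K pi (T - 1) nil (fun h => INR (maxZ K h))
  <= (INR T - 1) / INR (K - 1)
     + sqrt (INR T / 2 * ln (sqrt (INR T) * INR (K - 1)))
     + 2 * sqrt (INR T).
Proof.
  set (c := sqrt (INR T)).
  set (w := / INR (K - 1)).
  assert (Hc : 0 < c) by (apply sqrt_lt_R0; apply (lt_INR 0); lia).
  assert (Hw : 0 < w) by (apply w_pos; auto).
  set (g := fun h => INR (length h) * w + c / 2 + V K pi h / (2 * c)).
  assert (HV : forall h, 0 <= V K pi h).
  { intros h. unfold V. rewrite <- (Rmult_0_r (INR (length (arms K)))), <- lsum_const.
    apply lsum_le_in; intros; apply Rle_0_sqr. }
  apply Rle_trans with (expval K pi (T - 1) [] g).
  { apply expval_mono; auto. intros h. unfold g.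
    pose proof (maxZ_bound K pi h hK hpi). pose proof (sqrt_tangent _ _ (HV h) Hc). fold w in H. lra. }
  eapply Rle_trans. apply (expval_super K pi (T - 1) (w + / c) g hK hpi).
  { intros h. unfold g.
    rewrite (step2_ext_in _ _ _ _ (fun x b => (INR (length h) * w + w + c / 2) + / (2 * c) * V K pi (h ++ [(x, b)]))).
    2:{ intros. rewrite length_app, plus_INR. simpl INR. unfold Rdiv. ring. }
    rewrite step2_add, step2_const, step2_scal by auto.
    pose proof (V_step K pi h hK hpi).
    assert (0 < / (2 * c)) by (apply Rinv_0_lt_compat; lra).
    replace (/ c) with (/ (2 * c) * 2) by (field; lra).
    unfold Rdiv. nra. }
  unfold g. simpl length.
  assert (V0 : V K pi [] = 0).
  { unfold V. rewrite (lsum_ext_in _ _ (fun _ => 0)). rewrite lsum_const; ring.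
    intros; unfold M; simpl; unfold Rsqr; ring. }
  rewrite V0.
  assert (Hn : INR (T - 1) = INR T - 1) by (rewrite minus_INR by lia; simpl; ring).
  rewrite Hn.
  assert (HcT : c * c = INR T) by (apply sqrt_sqrt, pos_INR).
  pose proof (sqrt_pos (INR T / 2 * ln (sqrt (INR T) * INR (K - 1)))).
  assert (Hq : (INR T - 1) * / c <= c).
  { apply Rmult_le_reg_r with c; auto. rewrite Rmult_assoc, Rinv_l by lra. nra. }
  fold c. unfold Rdiv. fold w. simpl INR. rewrite Rmult_plus_distr_l, !Rmult_0_l. pose proof (sqrt_pos (INR T * / 2 * ln (c * INR (K - 1)))). lra.
Qed.
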